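(* If a pattern $\mathcal P$ is the union of a set row bounded by $n$ and a set column bounded by $m$, then $\mathcal P$ is Schur bounded with $\mathfrak s(\mathcal P)\le\sqrt n+\sqrt m$. Likewise, if $A=B+C$ where $B,C$ are nonnegative matrices, $B$ row bounded by $L$ and $C$ column bounded by $M$, then $\mathfrak s(\mathcal S(A))\le L+M$.
   Context: For a matrix $S=[s_{ij}]$, the Schur multiplier acts on bounded operators $T=[t_{ij}]$ on $\ell^2$ by $T\mapsto[s_{ij}t_{ij}]$, with norm $\|S\|_m$. For a pattern $\mathcal P\subseteq\mathbb N\times\mathbb N$, $\mathcal S(\mathcal P)$ is the set of matrices supported on $\mathcal P$ with entries of modulus at most $1$; $\mathfrak s(\mathcal P)=\sup_{X\in\mathcal S(\mathcal P)}\|X\|_m$, and $\mathcal P$ is Schur bounded if every element of $\mathcal S(\mathcal P)$ is a bounded Schur multiplier. For a nonnegative matrix $A$, $\mathcal S(A)=\{S:|s_{ij}|\le a_{ij}\}$ and $\mathfrak s(\mathcal S(A))=\sup_{S\in\mathcal S(A)}\|S\|_m$. A pattern is row bounded by $n$ if each row contains at most $n$ of its elements (column bounded similarly). A nonnegative matrix is row bounded by $L$ if $\sup_i\sum_j a_{ij}^2\le L^2$ (column bounded similarly). *)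

(* Defs.v *)
From mathcomp Require Import all_boot all_algebra.
From mathcomp Require Import complex.
From mathcomp Require Import all_classical all_reals.
From mathcomp Require Import ereal.
Import GRing.Theory Num.Theory.

Set Implicit Arguments.
Unset Strict Implicit.
Unset Printing Implicit Defensive.

Local Open Scope ring_scope.
Local Open Scope classical_set_scope.

Section SchurDefs.
Variable R : realType.

Definition cmat := nat -> nat -> R[i].

Definition cmod (z : R[i]) : R := Num.sqrt (complex.Re z ^+ 2 + complex.Im z ^+ 2).

Definition bilin (T : cmat) (x y : nat -> R[i]) (N : nat) : R[i] :=
  \sum_(i < N) \sum_(j < N) conjc (y i) * T i j * x j.

Definition in_unit_ball (x : nat -> R[i]) (N : nat) : Prop :=
  \sum_(j < N) cmod (x j) ^+ 2 <= 1.

(* operator norm on l^2 of the operator defined by the matrix T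
   (+oo when T does not define a bounded operator); computed on the
   dense subspace of finitely supported vectors *)
Definition opnorm (T : cmat) : \bar R :=
  ereal_sup [set r | exists N x y, in_unit_ball x N /\ in_unit_ball y N /\
                                   r = (cmod (bilin T x y N))%:E].

Definition schur (S T : cmat) : cmat := fun i j => S i j * T i j.

(* Schur multiplier norm ||S||_m (+oo if S is not a bounded Schur multiplier) *)
Definition schur_norm (S : cmat) : \bar R :=
  ereal_sup [set opnorm (schur S T) | T in [set T | (opnorm T <= 1%:E)%E]].

Definition SP (P : set (nat * nat)) : set cmat :=
  [set S | (forall i j, ~ P (i, j) -> S i j = 0) /\ (forall i j, cmod (S i j) <= 1)].

Definition schur_bounded (P : set (nat * nat)) : Prop :=
  forall S, SP P S -> (schur_norm S < +oo)%E.

Definition frak_s (P : set (nat * nat)) : \bar R := ereal_sup (schur_norm @` SP P).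

Definition SA (A : nat -> nat -> R) : set cmat :=
  [set S | forall i j, cmod (S i j) <= A i j].

Definition frak_s_A (A : nat -> nat -> R) : \bar R := ereal_sup (schur_norm @` SA A).

Definition mat_row_bounded (B : nat -> nat -> R) (L : R) : Prop :=
  forall i N, \sum_(j < N) B i j ^+ 2 <= L ^+ 2.
Definition mat_col_bounded (B : nat -> nat -> R) (L : R) : Prop :=
  forall j N, \sum_(i < N) B i j ^+ 2 <= L ^+ 2.

End SchurDefs.

Definition pat_row_bounded (P : set (nat * nat)) (n : nat) : Prop :=
  forall i (s : seq nat), uniq s -> (forall j, j \in s -> P (i, j)) -> (size s <= n)%N.
Definition pat_col_bounded (P : set (nat * nat)) (n : nat) : Prop :=
  forall j (s : seq nat), uniq s -> (forall i, i \in s -> P (i, j)) -> (size s <= n)%N.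

(* Main.v *)
Require Import Defs.
From mathcomp Require Import all_boot all_algebra complex all_classical all_reals ereal.
From mathcomp Require Import all_order ring lra.
Import Order.TTheory GRing.Theory Num.Theory.
Local Open Scope ring_scope.
Local Open Scope classical_set_scope.
Section S.
Variable R : realType.
Implicit Types z w : R[i].
Lemma cmodE z : (cmod z)%:C%C = `|z|.
Proof. by rewrite normc_def. Qed.
Lemma cmod_ge0 z : 0 <= cmod z.
Proof. exact: sqrtr_ge0. Qed.
Lemma cmodM z w : cmod (z * w) = cmod z * cmod w.
Proof. apply: complexI; by rewrite cmodE normrM -!cmodE rmorphM. Qed.
Lemma cmodD z w : cmod (z + w) <= cmod z + cmod w.
Proof. rewrite -(@lecR R) rmorphD /= !cmodE; exact: ler_normD. Qed.
Lemma cmodJ z : cmod (conjc z) = cmod z.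
Proof. by case: z => a b; rewrite /cmod /= sqrrN. Qed.
Lemma cmodR (c : R) : 0 <= c -> cmod (c%:C%C) = c.
Proof. move=> c0; by rewrite /cmod /= expr0n /= addr0 sqrtr_sqr ger0_norm. Qed.
Lemma cmod_eq0 z : cmod z = 0 -> z = 0.
Proof. move=> h; apply/eqP; rewrite -normr_eq0 -cmodE h //. Qed.
Lemma cmod0 : cmod (0 : R[i]) = 0.
Proof. by rewrite /cmod /= expr0n /= addr0 sqrtr0. Qed.
Lemma cmod_sum (I : finType) (F : I -> R[i]) : cmod (\sum_i F i) <= \sum_i cmod (F i).
Proof.
elim/big_ind2: _ => //; first by rewrite cmod0.
move=> a b c d h1 h2; apply: le_trans (cmodD _ _) _; exact: lerD.
Qed.
Definition nrm (X : nat -> R[i]) N := \sum_(j < N) cmod (X j) ^+ 2.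
Lemma nrm_ge0 X N : 0 <= nrm X N.
Proof. by apply: sumr_ge0 => j _; rewrite exprn_ge0 // cmod_ge0. Qed.
Lemma nrm0 X N : nrm X N = 0 -> forall j : 'I_N, X j = 0.
Proof.
move=> h j; have /eqP : cmod (X j) ^+ 2 = 0.
  by apply: (psumr_eq0P _ h) => // i _; by rewrite exprn_ge0 // cmod_ge0.
rewrite sqrf_eq0 => /eqP.
exact: cmod_eq0.
Qed.
Lemma cmodRn (c : R) : cmod (c%:C%C) = `|c|.
Proof. by rewrite /cmod /= expr0n /= addr0 sqrtr_sqr. Qed.
Lemma nrm_scale X N (c : R) : nrm (fun j => X j * c%:C%C) N = nrm X N * c ^+ 2.
Proof.
rewrite /nrm mulr_suml; apply: eq_bigr => j _.
by rewrite cmodM cmodRn exprMn (real_normK (num_real c)).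
Qed.
Lemma conjMR (z : R[i]) (c : R) : conjc (z * c%:C%C) = conjc z * c%:C%C.
Proof.
case: z => x y; apply/eqP; rewrite eq_complex /=; apply/andP; split; apply/eqP; ring.
Qed.
Lemma realcM (a b : R) : (a * b)%:C%C = a%:C%C * b%:C%C :> R[i].
Proof. apply/eqP; rewrite eq_complex /=; apply/andP; split; apply/eqP; ring. Qed.
Lemma bilin_scale T X Y N (a b : R) :
  bilin T (fun j => X j * a%:C%C) (fun i => Y i * b%:C%C) N = (a * b)%:C%C * bilin T X Y N.
Proof.
rewrite /bilin mulr_sumr; apply: eq_bigr => i _.
rewrite mulr_sumr; apply: eq_bigr => j _.
by rewrite conjMR realcM; ring.
Qed.
Lemma opnorm_bound T N X Y : (opnorm T <= 1%:E)%E ->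
  cmod (bilin T X Y N) <= Num.sqrt (nrm X N) * Num.sqrt (nrm Y N).
Proof.
move=> hT.
have ub u v : in_unit_ball u N -> in_unit_ball v N -> cmod (bilin T u v N) <= 1.
  move=> hu hv; rewrite -lee_fin; apply: le_trans hT; apply: ereal_sup_ubound.
  by exists N, u, v.
have [X0|Xn0] := eqVneq (nrm X N) 0.
  have h := @nrm0 X N X0.
  rewrite /bilin big1 ?cmod0 ?mulr_ge0 ?sqrtr_ge0 // => i _.
  by rewrite big1 // => j _; rewrite h mulr0.
have [Y0|Yn0] := eqVneq (nrm Y N) 0.
  have h := @nrm0 Y N Y0.
  rewrite /bilin big1 ?cmod0 ?mulr_ge0 ?sqrtr_ge0 // => i _.
  by rewrite big1 // => j _; rewrite h conjc0 !mul0r.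
set a := Num.sqrt (nrm X N); set b := Num.sqrt (nrm Y N).
have a0 : 0 < a by rewrite sqrtr_gt0 lt0r Xn0 nrm_ge0.
have b0 : 0 < b by rewrite sqrtr_gt0 lt0r Yn0 nrm_ge0.
have hu : in_unit_ball (fun j => X j * (a^-1)%:C%C) N.
  have := nrm_scale X N a^-1; rewrite /nrm /in_unit_ball => ->.
  rewrite -[X in X * _](@sqr_sqrtr _ (nrm X N)) ?nrm_ge0 // -/a exprVn mulfV //.
  by rewrite expf_neq0 // gt_eqF.
have hv : in_unit_ball (fun j => Y j * (b^-1)%:C%C) N.
  have := nrm_scale Y N b^-1; rewrite /nrm /in_unit_ball => ->.
  rewrite -[X in X * _](@sqr_sqrtr _ (nrm Y N)) ?nrm_ge0 // -/b exprVn mulfV //.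
  by rewrite expf_neq0 // gt_eqF.
have := ub _ _ hu hv.
rewrite bilin_scale cmodM cmodR; last by rewrite mulr_ge0 // invr_ge0 ltW.
move=> h.
have -> : cmod (bilin T X Y N) = (a * b) * (a^-1 * b^-1 * cmod (bilin T X Y N)).
  by rewrite mulrA mulrACA !mulfV ?gt_eqF // mul1r mul1r.
by rewrite -[X in _ <= X]mulr1; apply: ler_wpM2l => //; rewrite mulr_ge0 // ltW.
Qed.
Lemma amgm_term (u v a b : R) : 0 < a -> 0 < b ->
  u * v <= (b / a * u ^+ 2 + a / b * v ^+ 2) / 2.
Proof.
move=> a0 b0.
have e : (b / a * u ^+ 2 + a / b * v ^+ 2) / 2 - u * v = (b * u - a * v) ^+ 2 / (2 * a * b).
  by field; rewrite ?gt_eqF.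
rewrite -subr_ge0 e; apply: divr_ge0; first exact: sqr_ge0.
by rewrite !mulr_ge0 // ltW.
Qed.
Lemma sum_sqrt N (p q : 'I_N -> R) (al be : R) :
  (forall k, 0 <= p k) -> (forall k, 0 <= q k) -> 0 <= al -> 0 <= be ->
  \sum_k p k <= al ^+ 2 -> \sum_k q k <= be ^+ 2 ->
  \sum_k Num.sqrt (p k) * Num.sqrt (q k) <= al * be.
Proof.
move=> p0 q0 al0 be0 hp hq.
have [al_eq|aln0] := eqVneq al 0.
  rewrite al_eq in hp *.
  have hs : \sum_k p k = 0 by apply/eqP; rewrite eq_le sumr_ge0 // andbT; move: hp; rewrite expr0n.
  rewrite big1 ?mul0r // => k _; by rewrite (psumr_eq0P (fun i _ => p0 i) hs) // sqrtr0 mul0r.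
have [be_eq|ben0] := eqVneq be 0.
  rewrite be_eq in hq *.
  have hs : \sum_k q k = 0 by apply/eqP; rewrite eq_le sumr_ge0 // andbT; move: hq; rewrite expr0n.
  rewrite big1 ?mulr0 // => k _; by rewrite (psumr_eq0P (fun i _ => q0 i) hs) // sqrtr0 mulr0.
have a0 : 0 < al by rewrite lt0r aln0.
have b0 : 0 < be by rewrite lt0r ben0.
apply: (@le_trans _ _ (\sum_k (be / al * p k + al / be * q k) / 2)).
  apply: ler_sum => k _; have := @amgm_term (Num.sqrt (p k)) (Num.sqrt (q k)) al be a0 b0.
  by rewrite !sqr_sqrtr.
rewrite -mulr_suml big_split /= -!mulr_sumr.
apply: (@le_trans _ _ ((be / al * al ^+ 2 + al / be * be ^+ 2) / 2)).
  apply: ler_wpM2r; first by rewrite invr_ge0.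
  apply: lerD; apply: ler_wpM2l => //; apply: divr_ge0 => //; exact: ltW.
rewrite le_eqVlt; apply/orP; left; apply/eqP; field; rewrite ?gt_eqF //.
Qed.
Lemma factor_bound T U N x y (X Y : 'I_N -> nat -> R[i]) al be :
  (opnorm T <= 1%:E)%E -> bilin U x y N = \sum_(k < N) bilin T (X k) (Y k) N ->
  \sum_k nrm (X k) N <= al ^+ 2 -> \sum_k nrm (Y k) N <= be ^+ 2 -> 0 <= al -> 0 <= be ->
  cmod (bilin U x y N) <= al * be.
Proof.
move=> hT -> hX hY a0 b0.
apply: le_trans (cmod_sum _ _) _.
apply: le_trans (@sum_sqrt N (fun k => nrm (X k) N) (fun k => nrm (Y k) N) al be _ _ a0 b0 hX hY).
- by apply: ler_sum => k _; exact: opnorm_bound.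
- by move=> k; exact: nrm_ge0.
- by move=> k; exact: nrm_ge0.
Qed.
Lemma sum_delta (V : zmodType) N (k : 'I_N) (F : 'I_N -> V) :
  (forall j, j != k -> F j = 0) -> \sum_j F j = F k.
Proof. by move=> h; rewrite (bigD1 k) //= big1 ?addr0 // => j hj; exact: h. Qed.
Lemma conjMJ (z w : R[i]) : conjc (z * conjc w) = conjc z * w.
Proof. case: z => a b; case: w => c d; apply/eqP; rewrite eq_complex /=; apply/andP; split; apply/eqP; ring. Qed.
Lemma sq_le (a b : R) : 0 <= a -> a <= b -> a ^+ 2 <= b ^+ 2.
Proof. by move=> a0 ab; rewrite !expr2 ler_pM. Qed.
Lemma row_bound T N x y (b : cmat R) (B : nat -> nat -> R) L :
  (opnorm T <= 1%:E)%E -> in_unit_ball x N -> in_unit_ball y N -> 0 <= L ->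
  (forall i j, cmod (b i j) <= B i j) -> mat_row_bounded B L ->
  cmod (bilin (schur b T) x y N) <= L.
Proof.
move=> hT hx hy L0 hb hB.
rewrite -[L]mul1r.
apply: (@factor_bound T (schur b T) N x y (fun k j => if j == nat_of_ord k then x j else 0)
                     (fun (k : 'I_N) i => y i * conjc (b i k)) 1 L) => //.
- rewrite /bilin [RHS]exchange_big /=; apply: eq_bigr => i _.
  apply: eq_bigr => k _.
  rewrite (@sum_delta _ N k) => [|j hj]; last by rewrite ifF ?mulr0 //; exact/negbTE.
  rewrite eqxx conjMJ /schur; ring.
- rewrite expr1n; apply: le_trans _ hx; rewrite le_eqVlt; apply/orP; left; apply/eqP.
  apply: eq_bigr => k _; rewrite /nrm (@sum_delta _ N k) => [|j hj].
    by rewrite eqxx.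
  by rewrite ifF ?cmod0 ?expr0n //; exact/negbTE.
- rewrite /nrm exchange_big /=.
  apply: (@le_trans _ _ (\sum_(i < N) cmod (y i) ^+ 2 * L ^+ 2)).
    apply: ler_sum => i _.
    under eq_bigr => k _ do rewrite cmodM cmodJ exprMn.
    rewrite -mulr_sumr; apply: ler_wpM2l; first by rewrite exprn_ge0 ?cmod_ge0.
    apply: le_trans (hB i N); apply: ler_sum => k _; exact: sq_le (cmod_ge0 _) (hb _ _).
  rewrite -mulr_suml -[X in _ <= X]mul1r; apply: ler_wpM2r; first by rewrite exprn_ge0.
  exact: hy.
Qed.
Lemma col_bound T N x y (c : cmat R) (C : nat -> nat -> R) M :
  (opnorm T <= 1%:E)%E -> in_unit_ball x N -> in_unit_ball y N -> 0 <= M ->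
  (forall i j, cmod (c i j) <= C i j) -> mat_col_bounded C M ->
  cmod (bilin (schur c T) x y N) <= M.
Proof.
move=> hT hx hy M0 hc hC.
rewrite -[M]mulr1.
apply: (@factor_bound T (schur c T) N x y (fun (k : 'I_N) j => x j * c k j)
                     (fun k i => if i == nat_of_ord k then y i else 0) M 1) => //.
- rewrite /bilin; apply: eq_bigr => k _.
  rewrite [RHS](@sum_delta _ N k) => [|i hi]; last first.
    by apply: big1 => j _; rewrite ifF ?conjc0 ?mul0r //; exact/negbTE.
  rewrite eqxx; apply: eq_bigr => j _; rewrite /schur; ring.
- rewrite /nrm exchange_big /=.
  apply: (@le_trans _ _ (\sum_(j < N) cmod (x j) ^+ 2 * M ^+ 2)).
    apply: ler_sum => j _.
    under eq_bigr => k _ do rewrite cmodM exprMn.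
    rewrite -mulr_sumr; apply: ler_wpM2l; first by rewrite exprn_ge0 ?cmod_ge0.
    apply: le_trans (hC j N); apply: ler_sum => k _; exact: sq_le (cmod_ge0 _) (hc _ _).
  rewrite -mulr_suml -[X in _ <= X]mul1r; apply: ler_wpM2r; first by rewrite exprn_ge0.
  exact: hx.
- rewrite expr1n; apply: le_trans _ hy; rewrite le_eqVlt; apply/orP; left; apply/eqP.
  apply: eq_bigr => k _; rewrite /nrm (@sum_delta _ N k) => [|j hj].
    by rewrite eqxx.
  by rewrite ifF ?cmod0 ?expr0n //; exact/negbTE.
Qed.
Lemma bilin_add (S b c T : cmat R) x y N :
  (forall i j, S i j = b i j + c i j) ->
  bilin (schur S T) x y N = bilin (schur b T) x y N + bilin (schur c T) x y N.
Proof.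
move=> h; rewrite /bilin -big_split; apply: eq_bigr => i _.
rewrite -big_split; apply: eq_bigr => j _; by rewrite /schur h /= mulrDl mulrDr mulrDl.
Qed.
Lemma realcB (z : R[i]) (a : R) : z - z * a%:C%C = z * (1 - a)%:C%C.
Proof.
case: z => u v; apply/eqP; rewrite eq_complex /=; apply/andP; split; apply/eqP; ring.
Qed.
Lemma split_bound (s : R[i]) (p q : R) : 0 <= p -> 0 <= q -> cmod s <= p + q ->
  cmod (s * (p / (p + q))%:C%C) <= p /\ cmod (s - s * (p / (p + q))%:C%C) <= q.
Proof.
move=> p0 q0 hs.
have [e|ne] := eqVneq (p + q) 0.
  have s0 : s = 0 by apply: cmod_eq0; apply/eqP; rewrite eq_le cmod_ge0 andbT -e.
  by rewrite s0 mul0r subr0 cmod0.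
have pq0 : 0 < p + q by rewrite lt0r ne addr_ge0.
split.
  rewrite cmodM cmodR ?divr_ge0 ?addr_ge0 //.
  apply: le_trans (ler_wpM2r _ hs) _; first by rewrite divr_ge0 ?addr_ge0.
  by rewrite mulrCA mulfV ?mulr1.
rewrite realcB cmodM cmodR; last first.
  by rewrite subr_ge0 ler_pdivrMr // mul1r lerDl.
have -> : 1 - p / (p + q) = q / (p + q) by field.
apply: le_trans (ler_wpM2r _ hs) _; first by rewrite divr_ge0 ?addr_ge0.
by rewrite mulrCA mulfV ?mulr1.
Qed.
Lemma main_bound (S : cmat R) (B C : nat -> nat -> R) L M :
  0 <= L -> 0 <= M -> (forall i j, 0 <= B i j) -> (forall i j, 0 <= C i j) ->
  mat_row_bounded B L -> mat_col_bounded C M ->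
  (forall i j, cmod (S i j) <= B i j + C i j) ->
  (schur_norm S <= (L + M)%:E)%E.
Proof.
move=> L0 M0 B0 C0 hB hC hS.
pose b := fun i j => S i j * (B i j / (B i j + C i j))%:C%C.
pose c := fun i j => S i j - b i j.
have hb i j : cmod (b i j) <= B i j by have [] := @split_bound (S i j) (B i j) (C i j) (B0 i j) (C0 i j) (hS i j).
have hc i j : cmod (c i j) <= C i j by have [] := @split_bound (S i j) (B i j) (C i j) (B0 i j) (C0 i j) (hS i j).
rewrite /schur_norm; apply: ge_ereal_sup => _ [T hT <-].
apply: ge_ereal_sup => _ [N [x [y [hx [hy ->]]]]].
rewrite lee_fin (@bilin_add S b c T x y N); last by move=> i j; rewrite /c addrC subrK.
apply: le_trans (cmodD _ _) _; apply: lerD.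
  exact: row_bound hT hx hy L0 hb hB.
exact: col_bound hT hx hy M0 hc hC.
Qed.
End S.

Section P.
Variable R : realType.
Lemma sum_ind_seq (p : pred nat) (r : seq nat) :
  \sum_(j <- r) (if p j then 1 else 0 : R) = (count p r)%:R.
Proof.
elim: r => [|a r IH]; first by rewrite big_nil.
rewrite big_cons /= IH; case: (p a); by rewrite ?add0r // natrD.
Qed.
Lemma sq01 (b : bool) : (if b then 1 else 0 : R) ^+ 2 = if b then 1 else 0.
Proof. by case: b; rewrite ?expr1n ?expr0n. Qed.
Lemma pat_row_mat (P : set (nat * nat)) n :
  pat_row_bounded P n ->
  mat_row_bounded (fun i j => if `[< P (i, j) >] then 1 else 0 : R) (Num.sqrt (n%:R : R)).
Proof.
move=> hP i N; rewrite sqr_sqrtr ?ler0n //.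
under eq_bigr => j _ do rewrite sq01.
rewrite -(big_mkord xpredT (fun j => if `[< P (i, j) >] then 1 else 0 : R)).
rewrite (sum_ind_seq (fun j => `[< P (i, j) >])) ler_nat -size_filter.
apply: (hP i); first by rewrite filter_uniq // iota_uniq.
by move=> j; rewrite mem_filter => /andP[/asboolP].
Qed.
Lemma pat_col_mat (P : set (nat * nat)) n :
  pat_col_bounded P n ->
  mat_col_bounded (fun i j => if `[< P (i, j) >] then 1 else 0 : R) (Num.sqrt (n%:R : R)).
Proof.
move=> hP j N; rewrite sqr_sqrtr ?ler0n //.
under eq_bigr => i _ do rewrite sq01.
rewrite -(big_mkord xpredT (fun i => if `[< P (i, j) >] then 1 else 0 : R)).
rewrite (sum_ind_seq (fun i => `[< P (i, j) >])) ler_nat -size_filter.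
apply: (hP j); first by rewrite filter_uniq // iota_uniq.
by move=> i; rewrite mem_filter => /andP[/asboolP].
Qed.
End P.
Theorem corollary2p6 (R : realType) :
  (forall (P Prow Pcol : set (nat * nat)) (n m : nat),
      P = Prow `|` Pcol -> pat_row_bounded Prow n -> pat_col_bounded Pcol m ->
      schur_bounded R P /\
      (frak_s R P <= (Num.sqrt (n%:R : R) + Num.sqrt (m%:R : R))%:E)%E) /\
  (forall (A B C : nat -> nat -> R) (L M : R),
      0 <= L -> 0 <= M ->
      (forall i j, 0 <= B i j) -> (forall i j, 0 <= C i j) ->
      (forall i j, A i j = B i j + C i j) ->
      mat_row_bounded B L -> mat_col_bounded C M ->
      (frak_s_A A <= (L + M)%:E)%E).
Proof.
split; last first.
  move=> A B C L M L0 M0 B0 C0 hA hB hC.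
  apply: ge_ereal_sup => _ [S hS <-].
  apply: (@main_bound R S B C L M L0 M0 B0 C0 hB hC) => i j; rewrite -hA; exact: hS.
move=> P Prow Pcol n m hP hr hc.
pose B := fun i j => if `[< Prow (i, j) >] then 1 else 0 : R.
pose C := fun i j => if `[< Pcol (i, j) >] then 1 else 0 : R.
have B0 i j : 0 <= B i j by rewrite /B; case: ifP.
have C0 i j : 0 <= C i j by rewrite /C; case: ifP.
have key S : SP (R:=R) P S -> (schur_norm S <= (Num.sqrt (n%:R : R) + Num.sqrt (m%:R : R))%:E)%E.
  move=> [hz h1].
  apply: (@main_bound R S B C _ _ (sqrtr_ge0 _) (sqrtr_ge0 _) B0 C0 (@pat_row_mat R _ _ hr) (@pat_col_mat R _ _ hc)).
  move=> i j; rewrite /B /C.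
  case: (boolP `[< Prow (i, j) >]) => hR.
    by apply: le_trans (h1 i j) _; rewrite lerDl; case: ifP.
  case: (boolP `[< Pcol (i, j) >]) => hC.
    by rewrite add0r.
  rewrite hz ?cmod0 ?addr0 //; rewrite hP => -[] h.
    by move/negP: hR; apply; apply/asboolP.
  by move/negP: hC; apply; apply/asboolP.
split.
  by move=> S hS; apply: le_lt_trans (key S hS) _; exact: ltry.
by apply: ge_ereal_sup => _ [S hS <-]; exact: key.
Qed.
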